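(* Let $A,B\in\mathcal A_n$. Then $A\le B$ in ASM order if and only if there is a directed path from $A$ to $B$ in the ASM graph $(\mathcal A_n,\to)$.
   Context: An $n\times n$ matrix $A=(a_{ij})$ is an alternating sign matrix (ASM) if all $a_{ij}\in\{-1,0,1\}$, all partial row sums $\sum_{k\le j}a_{ik}$ and partial column sums $\sum_{k\le i}a_{kj}$ lie in $\{0,1\}$, and every full row sum and column sum equals $1$; $\mathcal A_n$ is the set of $n\times n$ ASMs. The corner sum matrix is $\widetilde A(i,j)=\sum_{p\le i,q\le j}a_{pq}$, with $\widetilde A(i,j)=0$ if $i=0$ or $j=0$. ASM order: $A\le B$ iff $\widetilde A(i,j)\ge\widetilde B(i,j)$ for all $i,j\in[n]$. For $i<j$, $k<l$ in $[n]$, $R_{ij}^{kl}=\{(p,q): i\le p<j,\ k\le q<l\}$ and $\widetilde R_{ij}^{kl}$ is the $0/1$ indicator matrix of $R_{ij}^{kl}$. $E(A)$ (essential rectangles): those $R_{ij}^{kl}$ with, for all $(p,q)\in R_{ij}^{kl}$, $\widetilde A(p,k)=\widetilde A(p,k-1)$, $\widetilde A(p,l)=\widetilde A(p,l-1)+1$, $\widetilde A(i,q)=\widetilde A(i-1,q)$, $\widetilde A(j,q)=\widetilde A(j-1,q)+1$. $E^*(A)$ (dual essential rectangles): those with $\widetilde A(p,k)=\widetilde A(p,k-1)+1$, $\widetilde A(p,l)=\widetilde A(p,l-1)$, $\widetilde A(i,q)=\widetilde A(i-1,q)+1$, $\widetilde A(j,q)=\widetilde A(j-1,q)$. The operator $r_{ij}^{kl}$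 sends $A$ to the ASM with corner sum matrix $\widetilde A+\widetilde R_{ij}^{kl}$ if $R_{ij}^{kl}\in E(A)$, $\widetilde A-\widetilde R_{ij}^{kl}$ if $R_{ij}^{kl}\in E^*(A)$, $\widetilde A$ otherwise. The bigrassmannian statistic is $\beta(A)=\sum_{i,j=1}^n\min(i,j)-\sum_{i,j=1}^n\widetilde A(i,j)$. ASM graph: directed edge $A\to B$ (labelled $(i,j,k,l)$, written $A\xrightarrow{ij,kl}B$) if $B=r_{ij}^{kl}(A)$ and $\beta(A)<\beta(B)$. *)

(* Defs.v *)
From HB Require Import structures.
From mathcomp Require Import all_boot all_order all_algebra.
From Stdlib Require Export Relations.Relation_Operators.
Set Implicit Arguments. Unset Strict Implicit. Unset Printing Implicit Defensive.
Import Order.TTheory GRing.Theory Num.Theory.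
Local Open Scope ring_scope.

(* Matrices are 'M[int]_n with 0-based entries A p q (p q : 'I_n);
   the paper's entry a_{p+1,q+1} is A p q. *)

Definition is_asm (n : nat) (A : 'M[int]_n) : Prop :=
  (forall i j : 'I_n, A i j = -1 \/ A i j = 0 \/ A i j = 1) /\
  (forall (i j : 'I_n),
      let s := \sum_(q < n | (q <= j)%N) A i q in s = 0 \/ s = 1) /\
  (forall (i j : 'I_n),
      let s := \sum_(p < n | (p <= i)%N) A p j in s = 0 \/ s = 1) /\
  (forall i : 'I_n, \sum_(q < n) A i q = 1) /\
  (forall j : 'I_n, \sum_(p < n) A p j = 1).

(* Corner sum matrix with the paper's 1-based indexing:
   csum A i j = sum_{p <= i, q <= j} a_{pq}; it is 0 when i = 0 or j = 0. *)
Definition csum (n : nat) (A : 'M[int]_n) (i j : nat) : int :=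
  \sum_(p < n | (p < i)%N) \sum_(q < n | (q < j)%N) A p q.

Definition asm_le (n : nat) (A B : 'M[int]_n) : Prop :=
  forall i j : nat, (1 <= i <= n)%N -> (1 <= j <= n)%N -> csum B i j <= csum A i j.

Definition inR (i j k l p q : nat) : bool := (i <= p < j)%N && (k <= q < l)%N.

Definition essentialb (n : nat) (A : 'M[int]_n) (i j k l : nat) : bool :=
  all (fun p => all (fun q =>
        [&& csum A p k == csum A p k.-1,
            csum A p l == csum A p l.-1 + 1,
            csum A i q == csum A i.-1 q &
            csum A j q == csum A j.-1 q + 1]) (iota k (l - k))) (iota i (j - i)).

Definition dual_essentialb (n : nat) (A : 'M[int]_n) (i j k l : nat) : bool :=
  all (fun p => all (fun q =>
        [&& csum A p k == csum A p k.-1 + 1,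
            csum A p l == csum A p l.-1,
            csum A i q == csum A i.-1 q + 1 &
            csum A j q == csum A j.-1 q]) (iota k (l - k))) (iota i (j - i)).

(* The matrix whose corner sum matrix is C (C given with paper indexing,
   C 0 _ = C _ 0 = 0). *)
Definition of_csum (n : nat) (C : nat -> nat -> int) : 'M[int]_n :=
  \matrix_(p < n, q < n) (C p.+1 q.+1 - C p q.+1 - C p.+1 q + C p q).

Definition r_op (n : nat) (i j k l : nat) (A : 'M[int]_n) : 'M[int]_n :=
  if essentialb A i j k l then
    of_csum n (fun p q => csum A p q + (if inR i j k l p q then 1 else 0))
  else if dual_essentialb A i j k l then
    of_csum n (fun p q => csum A p q - (if inR i j k l p q then 1 else 0))
  else A.

Definition beta (n : nat) (A : 'M[int]_n) : int :=
  (\sum_(1 <= i < n.+1) \sum_(1 <= j < n.+1) (minn i j)%:Z)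
  - \sum_(1 <= i < n.+1) \sum_(1 <= j < n.+1) csum A i j.

Definition asm_edge (n : nat) (A B : 'M[int]_n) : Prop :=
  is_asm A /\ is_asm B /\
  exists i j k l : nat,
    [&& (1 <= i)%N, (i < j)%N, (j <= n)%N, (1 <= k)%N, (k < l)%N & (l <= n)%N] /\
    B = r_op i j k l A /\ beta A < beta B.

(* Main.v *)
Require Import Defs.
From HB Require Import structures.
From mathcomp Require Import all_boot all_order all_algebra.
From Stdlib Require Import Relations.Relation_Operators.
From Stdlib Require Import Classical.
From mathcomp Require Import zify.
Set Implicit Arguments. Unset Strict Implicit. Unset Printing Implicit Defensive.
Import Order.TTheory GRing.Theory Num.Theory.
Local Open Scope ring_scope.

Lemma sum_ltS n (F : 'I_n -> int) (j : 'I_n) :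
  \sum_(q < n | (q < j.+1)%N) F q = \sum_(q < n | (q < j)%N) F q + F j.
Proof.
rewrite (bigD1 j) //= addrC; congr (_ + _).
apply: eq_bigl => q; rewrite -(inj_eq val_inj) /=.
case: (ltngtP q j) => h; lia.
Qed.

Lemma rowstep n (A : 'M[int]_n) (i : 'I_n) m :
  csum A i.+1 m = csum A i m + \sum_(q < n | (q < m)%N) A i q.
Proof. by rewrite /csum sum_ltS. Qed.

Lemma colstep n (A : 'M[int]_n) (j : 'I_n) m :
  csum A m j.+1 = csum A m j + \sum_(p < n | (p < m)%N) A p j.
Proof. by rewrite /csum -big_split; apply: eq_bigr => p _; rewrite sum_ltS. Qed.

Lemma csum0l n (A : 'M[int]_n) q : csum A 0 q = 0.
Proof. by rewrite /csum big_pred0 // => p; rewrite ltn0. Qed.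

Lemma csum0r n (A : 'M[int]_n) p : csum A p 0 = 0.
Proof. by rewrite /csum big1 // => i _; rewrite big_pred0 // => q; rewrite ltn0. Qed.

Lemma csumE n (A : 'M[int]_n) (i j : 'I_n) :
  csum A i.+1 j.+1 = csum A i j.+1 + csum A i.+1 j - csum A i j + A i j.
Proof.
rewrite !rowstep sum_ltS.
set x := csum A i j.+1; set y := csum A i j; set z := \sum_(q < n | (q < j)%N) A i q.
lia.
Qed.

Lemma csum_of n (C : nat -> nat -> int) :
  (forall q, C 0%N q = 0) -> (forall p, C p 0%N = 0) ->
  forall p q, (p <= n)%N -> (q <= n)%N -> csum (of_csum n C) p q = C p q.
Proof.
move=> C0 C0' p; elim: p => [|p IHp] q hp hq; first by rewrite csum0l C0.
elim: q hq => [|q IHq] hq; first by rewrite csum0r C0'.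
have hp' : (p < n)%N by []. have hq' : (q < n)%N by [].
have := csumE (of_csum n C) (Ordinal hp') (Ordinal hq'); rewrite /= mxE /= => ->.
rewrite IHp ?IHq ?IHp //; try lia.
Qed.

Lemma of_csumK n (A : 'M[int]_n) : of_csum n (csum A) = A.
Proof.
apply/matrixP => i j; rewrite mxE csumE.
set x := csum A i j.+1; set y := csum A i j; set z := csum A i.+1 j. lia.
Qed.

Definition good n (C : nat -> nat -> int) :=
  (forall q, C 0%N q = 0) /\ (forall p, C p 0%N = 0) /\
  (forall p q, (p <= n)%N -> (q < n)%N -> C p q.+1 = C p q \/ C p q.+1 = C p q + 1) /\
  (forall p q, (p < n)%N -> (q <= n)%N -> C p.+1 q = C p q \/ C p.+1 q = C p q + 1) /\
  (forall q, (q <= n)%N -> C n q = q%:Z) /\ (forall p, (p <= n)%N -> C p n = p%:Z).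

Lemma asm_good n (A : 'M[int]_n) : is_asm A -> good n (csum A).
Proof.
case=> _ [Hr [Hc [Fr Fc]]].
split; first exact: csum0l. split; first exact: csum0r.
split.
  move=> p q hp hq; have := colstep A (Ordinal hq) p; rewrite /= => ->.
  case: p hp => [|i] hi.
    by rewrite big_pred0 ?addr0; [left | move=> x; rewrite ltn0].
  have hi' : (i < n)%N by [].
  have := Hc (Ordinal hi') (Ordinal hq); rewrite /= => h.
  have -> : \sum_(p < n | (p < i.+1)%N) A p (Ordinal hq) = \sum_(p < n | (p <= i)%N) A p (Ordinal hq) by [].
  case: h => ->; [left | right]; by rewrite ?addr0.
split.
  move=> p q hp hq; have := rowstep A (Ordinal hp) q; rewrite /= => ->.
  case: q hq => [|j] hj.
    by rewrite big_pred0 ?addr0; [left | move=> x; rewrite ltn0].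
  have hj' : (j < n)%N by [].
  have := Hr (Ordinal hp) (Ordinal hj'); rewrite /= => h.
  have -> : \sum_(q < n | (q < j.+1)%N) A (Ordinal hp) q = \sum_(q < n | (q <= j)%N) A (Ordinal hp) q by [].
  case: h => ->; [left | right]; by rewrite ?addr0.
split.
  elim=> [|q IH] hq; first by rewrite csum0r.
  have hq' : (q < n)%N by [].
  have := colstep A (Ordinal hq') n; rewrite /= => ->.
  rewrite IH ?(ltnW hq') // (eq_bigl xpredT); last by move=> x; rewrite ltn_ord.
  by rewrite Fc -addn1 PoszD.
elim=> [|p IH] hp; first by rewrite csum0l.
have hp' : (p < n)%N by [].
have := rowstep A (Ordinal hp') n; rewrite /= => ->.
rewrite IH ?(ltnW hp') // (eq_bigl xpredT); last by move=> x; rewrite ltn_ord.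
by rewrite Fr -addn1 PoszD.
Qed.

Lemma good_asm n (C : nat -> nat -> int) : good n C -> is_asm (of_csum n C).
Proof.
case=> C0 [C0' [Hh [Hv [Bn Bn']]]].
have cs := csum_of C0 C0'.
set M := of_csum n C.
split.
  move=> i j; rewrite mxE.
  have h1 := Hh i.+1 j (ltn_ord i) (ltn_ord j).
  have h2 := Hh i j (ltnW (ltn_ord i)) (ltn_ord j).
  case: h1 => ->; case: h2 => ->; lia.
split.
  move=> i j /=.
  have -> : \sum_(q < n | (q <= j)%N) M i q = \sum_(q < n | (q < j.+1)%N) M i q by [].
  have := rowstep M i j.+1.
  rewrite !cs ?ltn_ord ?(ltnW (ltn_ord i)) // => h.
  have h1 := Hv i j.+1 (ltn_ord i) (ltn_ord j).
  case: h1 h => -> h; lia.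
split.
  move=> i j /=.
  have -> : \sum_(p < n | (p <= i)%N) M p j = \sum_(p < n | (p < i.+1)%N) M p j by [].
  have := colstep M j i.+1.
  rewrite !cs ?ltn_ord ?(ltnW (ltn_ord j)) // => h.
  have h1 := Hh i.+1 j (ltn_ord i) (ltn_ord j).
  case: h1 h => -> h; lia.
split.
  move=> i; have := rowstep M i n.
  rewrite (_ : \sum_(q < n | (q < n)%N) M i q = \sum_(q < n) M i q); last by apply: eq_bigl => x; rewrite ltn_ord.
  rewrite !cs ?ltn_ord ?(ltnW (ltn_ord i)) // !Bn' ?ltn_ord ?(ltnW (ltn_ord i)) //.
  move=> h; lia.
move=> j; have := colstep M j n.
rewrite (_ : \sum_(p < n | (p < n)%N) M p j = \sum_(p < n) M p j); last by apply: eq_bigl => x; rewrite ltn_ord.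
rewrite !cs ?ltn_ord ?(ltnW (ltn_ord j)) // !Bn ?ltn_ord ?(ltnW (ltn_ord j)) //.
move=> h; lia.
Qed.

Definition T n (A : 'M[int]_n) := \sum_(1 <= i < n.+1) \sum_(1 <= j < n.+1) csum A i j.

Lemma le_T n (A B : 'M[int]_n) : asm_le A B -> T B <= T A.
Proof.
move=> h; apply: ler_sum_nat => i hi; apply: ler_sum_nat => j hj; apply: h; lia.
Qed.

Lemma beta_T n (A : 'M[int]_n) : beta A = \sum_(1 <= i < n.+1) \sum_(1 <= j < n.+1) (minn i j)%:Z - T A.
Proof. by []. Qed.

Lemma csum_f_eq n (A : 'M[int]_n) (f : nat -> nat -> int) p q :
  (forall x, f 0%N x = 0) -> (forall x, f x 0%N = 0) -> (p <= n)%N -> (q <= n)%N ->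
  csum (of_csum n (fun p q => csum A p q + f p q)) p q = csum A p q + f p q.
Proof.
move=> f0 f0' hp hq; apply: csum_of => // x; by rewrite ?csum0l ?csum0r ?f0 ?f0' addr0.
Qed.

Lemma inR0l i j k l x : (1 <= i)%N -> inR i j k l 0 x = false.
Proof. by rewrite /inR; case: i. Qed.
Lemma inR0r i j k l x : (1 <= k)%N -> inR i j k l x 0 = false.
Proof. by rewrite /inR; case: k => // k _; rewrite andbF. Qed.

Lemma edge_le n (A B : 'M[int]_n) : asm_edge A B -> asm_le A B.
Proof.
case=> _ [_ [i [j [k [l [Hr [-> Hb]]]]]]].
have [hi hk] : (1 <= i)%N /\ (1 <= k)%N by lia.
move: Hb; rewrite /r_op.
case: essentialb.
  move=> Hb; exfalso.
  set B0 := of_csum _ _ in Hb.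
  have : asm_le B0 A.
    move=> p q hp hq.
    rewrite csum_f_eq; try lia; last by move=> x; rewrite inR0r.
      2: by move=> x; rewrite inR0l.
    by case: inR; lia.
  move/le_T; rewrite !beta_T in Hb; lia.
case: dual_essentialb.
  move=> _ p q hp hq.
  rewrite csum_f_eq; try lia; last by move=> x; rewrite inR0r.
    2: by move=> x; rewrite inR0l.
  by case: inR; lia.
by rewrite ltxx.
Qed.

Lemma forward n (A B : 'M[int]_n) :
  clos_refl_trans 'M[int]_n (@asm_edge n) A B -> asm_le A B.
Proof.
elim=> [x y /edge_le //|x|x y z _ h1 _ h2] p q hp hq //.
exact: le_trans (h2 p q hp hq) (h1 p q hp hq).
Qed.

Lemma max1 (g : nat -> int) n :
  exists p, (p <= n)%N /\ forall p', (p' <= n)%N -> g p' <= g p.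
Proof.
elim: n => [|n [p [hp H]]].
  by exists 0%N; split => // p'; rewrite leqn0 => /eqP ->.
case: (lerP (g n.+1) (g p)) => h.
  exists p; split; first lia.
  by move=> p'; rewrite leq_eqVlt => /orP[/eqP -> //|]; rewrite ltnS; exact: H.
exists n.+1; split => // p'; rewrite leq_eqVlt => /orP[/eqP -> //|].
by rewrite ltnS => /H h'; exact: le_trans h' (ltW h).
Qed.

Lemma max2 (f : nat -> nat -> int) n m : exists p q, [/\ (p <= n)%N, (q <= m)%N &
  forall p' q', (p' <= n)%N -> (q' <= m)%N -> f p' q' <= f p q].
Proof.
elim: n => [|n [p [q [hp hq H]]]].
  have [q [hq H]] := max1 (f 0%N) m.
  by exists 0%N, q; split => // p' q'; rewrite leqn0 => /eqP ->; exact: H.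
have [q' [hq' H']] := max1 (f n.+1) m.
case: (lerP (f n.+1 q') (f p q)) => h.
  exists p, q; split => //; first lia.
  move=> a b; rewrite leq_eqVlt => /orP[/eqP -> hb|]; first exact: le_trans (H' _ hb) h.
  by rewrite ltnS; exact: H.
exists n.+1, q'; split => // a b; rewrite leq_eqVlt => /orP[/eqP -> hb|]; first exact: H'.
by rewrite ltnS => ha hb; exact: le_trans (H _ _ ha hb) (ltW h).
Qed.

Lemma bounds n (C : nat -> nat -> int) : good n C ->
  forall p q, (p <= n)%N -> (q <= n)%N -> 0 <= C p q /\ C p q <= q%:Z.
Proof.
case=> _ [C0' [Hh _]] p q hp; elim: q => [|q IH] hq; first by rewrite C0'.
have := Hh p q hp hq; have := IH (ltnW hq); lia.
Qed.

Lemma inR1 a b x y : inR a a.+1 b b.+1 x y = (x == a) && (y == b).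
Proof. by rewrite /inR !ltnS -!eqn_leq (eq_sym a) (eq_sym b). Qed.

Lemma sum_if1 m c (x : int) : (1 <= c <= m)%N ->
  \sum_(1 <= j < m.+1) (if j == c then x else 0) = x.
Proof.
move=> hc; rewrite (bigD1_seq c) ?iota_uniq //=; last by rewrite mem_index_iota; lia.
by rewrite eqxx big1_seq ?addr0 // => j /andP[/negbTE -> _].
Qed.

Lemma sum_ind m c d : (1 <= c <= m)%N -> (1 <= d <= m)%N ->
  \sum_(1 <= i < m.+1) \sum_(1 <= j < m.+1) (if (i == c) && (j == d) then 1 else 0 : int) = 1.
Proof.
move=> hc hd; rewrite -[RHS](sum_if1 1 hc); apply: eq_bigr => i _.
rewrite -(sum_if1 (if i == c then 1 else 0) hd); apply: eq_bigr => j _.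
by case: (i == c); case: (j == d).
Qed.

Lemma eq_of_grid n (A B : 'M[int]_n) :
  (forall x y, (x <= n)%N -> (y <= n)%N -> csum A x y = csum B x y) -> A = B.
Proof.
move=> h; rewrite -(of_csumK A) -(of_csumK B); apply/matrixP => x y; rewrite !mxE.
have hx := ltn_ord x; have hy := ltn_ord y.
rewrite !h //; lia.
Qed.

Lemma step n (A B : 'M[int]_n) : is_asm A -> is_asm B -> asm_le A B ->
  (exists i j, [/\ (1 <= i <= n)%N, (1 <= j <= n)%N & csum B i j < csum A i j]) ->
  exists A', [/\ asm_edge A A', asm_le A' B & T A' = T A - 1].
Proof.
move=> hA hB hle [i [j [hi hj hij]]].
have gA := asm_good hA; have gB := asm_good hB.
have bA := bounds gA.
case: gA => A0 [A0' [HhA [HvA [AnA AnA']]]].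
case: gB => B0 [B0' [HhB [HvB [BnB BnB']]]].
have le0 : forall p q, (p <= n)%N -> (q <= n)%N -> csum B p q <= csum A p q.
  by move=> [|p] [|q] hp hq; rewrite ?csum0l ?csum0r //; apply: hle; lia.
pose K := (4 * n + 1)%:Z.
pose F p q := K * (csum A p q - csum B p q) + (2 * csum A p q - p%:Z - q%:Z).
have [p [q [hp hq Hm]]] := max2 F n n.
have hi' : (i <= n)%N by lia.
have hj' : (j <= n)%N by lia.
have Dpos : csum B p q < csum A p q.
  rewrite ltNge; apply/negP => h0.
  have e : csum A p q = csum B p q by have := le0 p q hp hq; lia.
  have h1 := Hm i j hi' hj'; rewrite /F e subrr mulr0 in h1.
  have h2 : K * 1 <= K * (csum A i j - csum B i j) by apply: ler_wpM2l => //; lia.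
  have := bA p q hp hq; have := bA i j hi' hj'; rewrite /K in h1 h2; lia.
case: p hp Hm Dpos => [|a] hp Hm Dpos; first by rewrite !csum0l ltxx in Dpos.
case: q hq Hm Dpos => [|b] hq Hm Dpos; first by rewrite !csum0r ltxx in Dpos.
have ha : (a.+1 < n)%N.
  rewrite ltn_neqAle hp andbT; apply/eqP => e; move: Dpos; rewrite e AnA // BnB // ltxx => //.
have hb : (b.+1 < n)%N.
  rewrite ltn_neqAle hq andbT; apply/eqP => e2; move: Dpos; rewrite e2 AnA' // BnB' // ltxx => //.
have c1 : csum A a.+1 b.+1 = csum A a.+1 b + 1.
  case: (HhA a.+1 b hp (ltnW hb)) => // e.
  have h := Hm a.+1 b hp (ltnW (ltnW hb)); have := HhB a.+1 b hp (ltnW hb).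
  rewrite /F /K in h; nia.
have c2 : csum A a.+1 b.+2 = csum A a.+1 b.+1.
  case: (HhA a.+1 b.+1 hp hb) => // e.
  have h := Hm a.+1 b.+2 hp hb; have := HhB a.+1 b.+1 hp hb.
  rewrite /F /K in h; nia.
have c3 : csum A a.+1 b.+1 = csum A a b.+1 + 1.
  case: (HvA a b.+1 (ltnW ha) hq) => // e.
  have h := Hm a b.+1 (ltnW (ltnW ha)) hq; have := HvB a b.+1 (ltnW ha) hq.
  rewrite /F /K in h; nia.
have c4 : csum A a.+2 b.+1 = csum A a.+1 b.+1.
  case: (HvA a.+1 b.+1 ha hq) => // e.
  have h := Hm a.+2 b.+1 ha hq; have := HvB a.+1 b.+1 ha hq.
  rewrite /F /K in h; nia.
pose ind x y : int := if inR a.+1 a.+2 b.+1 b.+2 x y then 1 else 0.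
pose C' x y := csum A x y + - ind x y.
have eA' : r_op a.+1 a.+2 b.+1 b.+2 A = of_csum n C'.
  rewrite /r_op.
  have -> : essentialb A a.+1 a.+2 b.+1 b.+2 = false.
    rewrite /essentialb !subSnn /=; apply/negbTE/negP => /andP[/andP[/and4P[/eqP e _ _ _] _] _]; lia.
  have -> : dual_essentialb A a.+1 a.+2 b.+1 b.+2 = true.
    rewrite /dual_essentialb !subSnn /= !andbT; apply/and4P; split; apply/eqP.
    - exact: c1.
    - exact: c2.
    - exact: c3.
    - exact: c4.
  by [].
have gC : good n C'.
  split; first by move=> x; rewrite /C' /ind inR1 csum0l.
  split; first by move=> x; rewrite /C' /ind inR1 csum0r andbF.
  split.
    move=> x y hx hy; have hA0 := HhA x y hx hy; rewrite /C' /ind !inR1.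
    case: ifP => [/andP[/eqP ? /eqP [?]]|_]; case: ifP => [/andP[/eqP ? /eqP ?]|_]; subst; lia.
  split.
    move=> x y hx hy; have hA0 := HvA x y hx hy; rewrite /C' /ind !inR1.
    case: ifP => [/andP[/eqP [?] /eqP ?]|_]; case: ifP => [/andP[/eqP ? /eqP ?]|_]; subst; lia.
  split.
    move=> y hy; rewrite /C' /ind !inR1 AnA //; case: ifP => [/andP[/eqP ? _]|_]; lia.
  move=> x hx; rewrite /C' /ind !inR1 AnA' //; case: ifP => [/andP[_ /eqP ?]|_]; lia.
have f0 : forall x, - ind 0%N x = 0 by move=> x; rewrite /ind inR0l.
have f0' : forall x, - ind x 0%N = 0 by move=> x; rewrite /ind inR0r.
have csA' : forall x y, (x <= n)%N -> (y <= n)%N ->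
    csum (r_op a.+1 a.+2 b.+1 b.+2 A) x y = csum A x y - ind x y.
  by move=> x y hx hy; rewrite eA' /C' csum_f_eq.
have TA' : T (r_op a.+1 a.+2 b.+1 b.+2 A) = T A - 1.
  rewrite /T -(sum_ind (m := n) (c := a.+1) (d := b.+1)); try lia.
  rewrite -sumrB; apply: eq_big_nat => x hx; rewrite -sumrB; apply: eq_big_nat => y hy.
  rewrite csA' /ind ?inR1 //; lia.
exists (r_op a.+1 a.+2 b.+1 b.+2 A); split => //.
  split => //; split; first by rewrite eA'; exact: good_asm.
  exists a.+1, a.+2, b.+1, b.+2; split; first by lia.
  by split => //; rewrite !beta_T TA'; lia.
move=> x y hx hy; rewrite csA' /ind ?inR1; try lia.
case: ifP => [/andP[/eqP -> /eqP ->]|_]; first lia.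
have := le0 x y; lia.
Qed.

Theorem mainTheorem3 (n : nat) (A B : 'M[int]_n) :
  is_asm A -> is_asm B ->
  (asm_le A B <-> clos_refl_trans 'M[int]_n (@asm_edge n) A B).
Proof.
move=> hA hB; split; last exact: forward.
move=> hle.
suff H : forall N (A0 : 'M[int]_n), is_asm A0 -> asm_le A0 B -> T A0 - T B = N%:Z ->
    clos_refl_trans 'M[int]_n (@asm_edge n) A0 B.
  have h := le_T hle.
  by apply: (H `|T A - T B|%N A) => //; lia.
elim=> [|N IH] A0 hA0 hle0 hN.
  case: (classic (exists i j, [/\ (1 <= i <= n)%N, (1 <= j <= n)%N & csum B i j < csum A0 i j])) => [ex|nex].
    have [A' [he hl hT]] := step hA0 hB hle0 ex.
    have := le_T hl; lia.
  have -> : A0 = B; last exact: rt_refl.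
  apply: eq_of_grid => x y hx hy.
  case: x hx => [|x] hx; first by rewrite !csum0l.
  case: y hy => [|y] hy; first by rewrite !csum0r.
  apply: le_anti; rewrite hle0 // andbT leNgt; apply/negP => h; apply: nex.
  by exists x.+1, y.+1; split.
case: (classic (exists i j, [/\ (1 <= i <= n)%N, (1 <= j <= n)%N & csum B i j < csum A0 i j])) => [ex|nex].
  have [A' [he hl hT]] := step hA0 hB hle0 ex.
  apply: rt_trans; first exact: rt_step he.
  apply: IH => //; first by case: he => _ [].
  lia.
have -> : A0 = B; last exact: rt_refl.
apply: eq_of_grid => x y hx hy.
case: x hx => [|x] hx; first by rewrite !csum0l.
case: y hy => [|y] hy; first by rewrite !csum0r.
apply: le_anti; rewrite hle0 // andbT leNgt; apply/negP => h; apply: nex.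
by exists x.+1, y.+1; split.
Qed.
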